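(* In $\mathbb{R}^8$ with coordinates $(l_{ijk})_{i,j,k\in\{0,1\}}$, let $X=\{l: l_{000}+l_{011}-l_{001}-l_{010}\ge0,\ l_{100}+l_{111}-l_{101}-l_{110}\ge0,\ l_{000}+l_{101}-l_{001}-l_{100}\ge0,\ l_{010}+l_{111}-l_{011}-l_{110}\ge0,\ l_{000}+l_{110}-l_{010}-l_{100}\ge0,\ l_{001}+l_{111}-l_{011}-l_{101}\ge0\}$, $Y=\{l: l_{000}+l_{011}-l_{001}-l_{010}\ge0,\ l_{100}+l_{111}-l_{101}-l_{110}\ge0,\ l_{000}+l_{101}-l_{001}-l_{100}\le0,\ l_{010}+l_{111}-l_{011}-l_{110}\le0,\ l_{000}+l_{110}-l_{010}-l_{100}\le0,\ l_{001}+l_{111}-l_{011}-l_{101}\le0\}$, $W=\{l: l_{000}+l_{011}-l_{001}-l_{010}\ge0,\ l_{100}+l_{111}-l_{101}-l_{110}\ge0\}$. Then the Minkowski sum $X+Y=\{x+y:x\in X,y\in Y\}$ equals $W$. *)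

(* Defs.v *)
From Stdlib Require Import Reals.
Open Scope R_scope.

(* A point of R^8 with coordinates l_{ijk}, i,j,k in {0,1}; we encode 0 as false, 1 as true. *)
Definition pt := bool -> bool -> bool -> R.


Definition f1 (l : pt) : R := l false false false + l false true true - l false false true - l false true false.
Definition f2 (l : pt) : R := l true false false + l true true true - l true false true - l true true false.
Definition f3 (l : pt) : R := l false false false + l true false true - l false false true - l true false false.
Definition f4 (l : pt) : R := l false true false + l true true true - l false true true - l true true false.
Definition f5 (l : pt) : R := l false false false + l true true false - l false true false - l true false false.
Definition f6 (l : pt) : R := l false false true + l true true true - l false true true - l true false true.

Definition Xset (l : pt) : Prop :=
  f1 l >= 0 /\ f2 l >= 0 /\ f3 l >= 0 /\ f4 l >= 0 /\ f5 l >= 0 /\ f6 l >= 0.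

Definition Yset (l : pt) : Prop :=
  f1 l >= 0 /\ f2 l >= 0 /\ f3 l <= 0 /\ f4 l <= 0 /\ f5 l <= 0 /\ f6 l <= 0.

Definition Wset (l : pt) : Prop := f1 l >= 0 /\ f2 l >= 0.

Definition minkowski_sum (A B : pt -> Prop) (l : pt) : Prop :=
  exists x y : pt, A x /\ B y /\ forall i j k, l i j k = x i j k + y i j k.

(* Main.v *)
Require Import Defs.
From Stdlib Require Import Reals Lra.
Open Scope R_scope.

Theorem mainTheorem2 : forall l : pt, minkowski_sum Xset Yset l <-> Wset l.
Proof.
  intro l; split.
  - intros [x [y [[h1 [h2 _]] [[g1 [g2 _]] E]]]].
    unfold Wset, f1, f2 in *. rewrite !E. lra.
  - intros [h1 h2].
    set (s := - (Rabs (f3 l) + Rabs (f4 l))).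
    set (t := - (Rabs (f5 l) + Rabs (f6 l))).
    set (y := fun i j k : bool => (if andb i k then s else 0) + (if andb i j then t else 0)).
    exists (fun i j k => l i j k - y i j k), y.
    pose proof (Rle_abs (- f3 l)); pose proof (Rle_abs (- f4 l));
    pose proof (Rle_abs (- f5 l)); pose proof (Rle_abs (- f6 l));
    pose proof (Rabs_pos (f3 l)); pose proof (Rabs_pos (f4 l));
    pose proof (Rabs_pos (f5 l)); pose proof (Rabs_pos (f6 l)).
    rewrite !Rabs_Ropp in *.
    unfold Xset, Yset, f1, f2, f3, f4, f5, f6 in *; unfold y, s, t in *; simpl.
    repeat split.
    all: try lra. all: intros; lra.
Qed.
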